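(* Let $(\Omega,\mathcal{F},\mathbf{P})$ be a probability space and $\theta\colon\Omega\to\Omega$ an ergodic automorphism of it. Let $A$ be an $N\times N$ matrix with all entries positive, and let $D(\omega)=\mathrm{diag}(d_1(\omega),\dots,d_N(\omega))$ be measurable in $\omega$ with $d_i(\omega)>0$ for all $i,\omega$ and $\ln^{+}\bigl(\max_i d_i(\cdot)\bigr)\in L_1(\Omega,\mathcal{F},\mathbf{P})$. Put $S(\omega)=AD(\omega)$, $S^{(n)}(\omega)=S(\theta^{n-1}\omega)\cdots S(\theta\omega)S(\omega)$, and let $\lambda$ be the top Lyapunov exponent of $\{S(\omega)\}_{\omega\in\Omega}$. Then there exist $\Omega_0\in\mathcal{F}$ with $\theta(\Omega_0)=\Omega_0$ and $\mathbf{P}(\Omega_0)=1$, a measurable mapping $w=(w_1,\dots,w_N)\colon\Omega_0\to\mathbb{R}^N$ with $w(\omega)$ a positive vector and $\|w(\omega)\|=1$ for all $\omega\in\Omega_0$, and a function $\rho\colon\Omega_0\to(0,\infty)$, such that $S(\omega)w(\omega)=\rho(\omega)w(\theta\omega)$ for all $\omega\in\Omega_0$, and $\lim_{n\to\infty}\frac1n\ln\|S^{(n)}(\omega)w(\omega)\|=\lambda$ for all $\omega\in\Omega_0$.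
   Context: An automorphism $\theta$ is ergodic if every $\theta$-invariant measurable set has probability $0$ or $1$. $\|\cdot\|$ denotes the Euclidean vector or matrix norm. The top Lyapunov exponent of $\{S(\omega)\}$ is the number $\lambda\in[-\infty,\infty)$ such that $\lambda=\lim_{n\to\infty}\frac1n\ln\|S^{(n)}(\omega)\|$ for a.e. $\omega$ (it exists when $\ln^+\|S(\cdot)\|\in L_1$). A vector is positive if all its coordinates are positive. *)

(* Defs.v *)
From HB Require Import structures.
From mathcomp Require Import all_boot all_order all_algebra.
From mathcomp Require Import all_classical all_reals all_analysis.
Set Implicit Arguments. Unset Strict Implicit. Unset Printing Implicit Defensive.
Import Order.TTheory GRing.Theory Num.Theory.
Import numFieldNormedType.Exports.
Local Open Scope classical_set_scope.
Local Open Scope ring_scope.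

Definition vnorm (R : realType) (N : nat) (v : 'cV[R]_N) : R :=
  Num.sqrt (\sum_(i < N) v i ord0 ^+ 2).

Definition mnorm (R : realType) (m n : nat) (M : 'M[R]_(m, n)) : R :=
  Num.sqrt (\sum_(i < m) \sum_(j < n) M i j ^+ 2).

Definition lnplus (R : realType) (x : R) : R := Num.max 0 (ln x).

Definition pos_vec (R : realType) (N : nat) (v : 'cV[R]_N) : Prop :=
  forall i, 0 < v i ord0.

Definition automorphism (d : measure_display) (T : measurableType d)
  (R : realType) (P : probability T R) (theta : T -> T) : Prop :=
  exists thetainv : T -> T,
    [/\ cancel theta thetainv, cancel thetainv theta,
        measurable_fun setT theta, measurable_fun setT thetainv &
        forall A, measurable A -> P (theta @^-1` A) = P A].

Definition ergodic (d : measure_display) (T : measurableType d)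
  (R : realType) (P : probability T R) (theta : T -> T) : Prop :=
  forall A, measurable A -> theta @^-1` A = A -> P A = 0%E \/ P A = 1%E.

Definition Smat (R : realType) (T : Type) (N : nat) (A : 'M[R]_N)
  (dd : T -> 'I_N -> R) (w : T) : 'M[R]_N :=
  A *m diag_mx (\row_i dd w i).

Fixpoint Scocycle (R : realType) (T : Type) (N : nat) (S : T -> 'M[R]_N)
  (theta : T -> T) (n : nat) (w : T) : 'M[R]_N :=
  match n with
  | 0 => 1%:M
  | k.+1 => S (iter k theta w) *m Scocycle S theta k w
  end.

Definition dmax (R : realType) (T : Type) (N : nat) (dd : T -> 'I_N -> R) (w : T) : R :=
  \big[Num.max/0]_(i < N) dd w i.

(* Main.v *)
Set Warnings "-all".
Require Import Defs.
From HB Require Import structures.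
From mathcomp Require Import all_boot all_order all_algebra.
From mathcomp Require Import all_classical all_reals all_analysis.
From mathcomp Require Import ring lra.
Import Order.TTheory GRing.Theory Num.Theory.
Import numFieldNormedType.Exports.
Local Open Scope classical_set_scope.
Local Open Scope ring_scope.
Section Core.
Variables (R : realType) (N : nat) (A : 'M[R]_N).

Definition ap (e x : 'I_N -> R) : 'I_N -> R := fun i => \sum_j A i j * e j * x j.

Fixpoint capp (e : nat -> 'I_N -> R) n x : 'I_N -> R :=
  match n with 0 => x | n.+1 => ap (e 0%N) (capp (fun k => e k.+1) n x) end.

Definition posf (x : 'I_N -> R) := forall i, 0 < x i.
Definition nnf (x : 'I_N -> R) := forall i, 0 <= x i.

Variable i0 : 'I_N.
Hypothesis hA : forall i j, 0 < A i j.
Variable r : R.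
Hypothesis r0 : 0 < r.
Hypothesis hr : forall i k j, r * A k j <= A i j.

Lemma sum_gt0 (f : 'I_N -> R) : posf f -> 0 < \sum_j f j.
Proof.
move=> hf; rewrite (bigD1 i0) //=; apply: ltr_wpDr; last exact: hf.
by apply: sumr_ge0 => j _; exact/ltW/hf.
Qed.

Lemma term_le_sum (f : 'I_N -> R) k : nnf f -> f k <= \sum_j f j.
Proof.
move=> hf; rewrite (bigD1 k) //= lerDl; apply: sumr_ge0 => j _; exact: hf.
Qed.

Lemma ap_pos e x : posf e -> posf x -> posf (ap e x).
Proof.
move=> he hx i; apply: sum_gt0 => j; apply: mulr_gt0 => //; exact: mulr_gt0.
Qed.

Lemma ap_nn e x : posf e -> nnf x -> nnf (ap e x).
Proof.
move=> he hx i; apply: sumr_ge0 => j _; apply: mulr_ge0 => //.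
exact/ltW/mulr_gt0.
Qed.

Lemma ap_bal e u : posf e -> nnf u -> forall i k, r * ap e u k <= ap e u i.
Proof.
move=> he hu i k; rewrite /ap mulr_sumr; apply: ler_sum => j _.
rewrite !mulrA; apply: ler_wpM2r => //; apply: ler_wpM2r; first exact/ltW.
exact: hr.
Qed.

Lemma ap_lin e x y a b i :
  ap e (fun j => a * x j + b * y j) i = a * ap e x i + b * ap e y i.
Proof.
rewrite /ap !mulr_sumr -big_split; apply: eq_bigr => j _ /=; ring.
Qed.

Lemma capp_pos e n x : (forall k, posf (e k)) -> posf x -> posf (capp e n x).
Proof.
elim: n e => [|n IH] e he hx //=; apply: ap_pos => //; exact: IH.
Qed.

Lemma capp_split n p e x :
  capp e (n + p) x = capp e n (capp (fun k => e (n + k)%N) p x).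
Proof.
elim: n e => [|n IH] e //=; by rewrite IH.
Qed.

Lemma helper (a0 ai b0 bi : R) : 0 <= a0 -> 0 <= bi ->
  r * a0 <= ai -> r * bi <= b0 -> r ^+ 2 * a0 * bi <= ai * b0.
Proof.
move=> ha hb h1 h2.
have -> : r ^+ 2 * a0 * bi = (r * a0) * (r * bi) by ring.
apply: ler_pM => //; apply: mulr_ge0 => //; exact: ltW.
Qed.


Lemma step e x y m M : posf e -> posf x -> posf y ->
  (forall i, m * y i <= x i <= M * y i) ->
  exists m' M', [/\ m <= m', M' - m' <= (1 - r ^+ 2) * (M - m) &
    forall i, m' * ap e y i <= ap e x i <= M' * ap e y i].
Proof.
move=> he hx hy hb.
set x' := ap e x; set y' := ap e y.
pose U := ap e (fun j => 1 * x j + (- m) * y j).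
pose V := ap e (fun j => M * y j + (- 1) * x j).
have UE i : U i = x' i - m * y' i by rewrite /U ap_lin /x' /y'; ring.
have VE i : V i = M * y' i - x' i by rewrite /V ap_lin /x' /y'; ring.
have Unn : nnf (fun j => 1 * x j + (- m) * y j).
  by move=> j /=; have := hb j; case/andP => h1 h2; lra.
have Vnn : nnf (fun j => M * y j + (- 1) * x j).
  by move=> j /=; have := hb j; case/andP => h1 h2; lra.
have Ub := ap_bal _ _ he Unn; have Vb := ap_bal _ _ he Vnn.
have U0 := ap_nn _ _ he Unn; have V0 := ap_nn _ _ he Vnn.
have yb := ap_bal _ _ he (fun j => ltW (hy j)).
have yp := ap_pos _ _ he hy.
have y0 : 0 < y' i0 by exact: yp.
pose a := U i0 / y' i0; pose b := V i0 / y' i0.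
have a0 : 0 <= a by apply: divr_ge0 => //; exact: ltW.
have b0 : 0 <= b by apply: divr_ge0 => //; exact: ltW.
have ab : a + b = M - m.
  rewrite /a /b -mulrDl UE VE.
  apply: (@mulIf _ (y' i0)); first by rewrite gt_eqF.
  rewrite mulfVK ?gt_eqF //; ring.
exists (m + r ^+ 2 * a), (M - r ^+ 2 * b); split.
- by rewrite lerDl; apply: mulr_ge0 => //; exact: sqr_ge0.
- have -> : M - r ^+ 2 * b - (m + r ^+ 2 * a) = (M - m) - r ^+ 2 * (a + b) by ring.
  by rewrite ab; lra.
move=> i; apply/andP; split.
- have h : r ^+ 2 * U i0 * y' i <= U i * y' i0.
    by apply: helper; [exact: U0 | exact/ltW/yp | exact: Ub | exact: yb].
  have h2 : r ^+ 2 * U i0 * y' i / y' i0 <= U i by rewrite ler_pdivrMr.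
  have -> : (m + r ^+ 2 * a) * y' i = m * y' i + r ^+ 2 * U i0 * y' i / y' i0.
    by rewrite /a; field; rewrite gt_eqF.
  by rewrite [U i]UE in h2; lra.
- have h : r ^+ 2 * V i0 * y' i <= V i * y' i0.
    by apply: helper; [exact: V0 | exact/ltW/yp | exact: Vb | exact: yb].
  have h2 : r ^+ 2 * V i0 * y' i / y' i0 <= V i by rewrite ler_pdivrMr.
  have -> : (M - r ^+ 2 * b) * y' i = M * y' i - r ^+ 2 * V i0 * y' i / y' i0.
    by rewrite /b; field; rewrite gt_eqF.
  by rewrite [V i]VE in h2; lra.
Qed.


Lemma r_le1 : r <= 1.
Proof.
have := hr i0 i0 i0; have := hA i0 i0 => h1 h2.
by rewrite -(ler_pM2r h1) mul1r.
Qed.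

Definition qq := 1 - r ^+ 2.
Definition KK := (r ^+ 4)^-1 - 1.

Lemma qq_ge0 : 0 <= qq.
Proof. rewrite /qq subr_ge0; have := r_le1; have := r0; nra. Qed.

Lemma qq_lt1 : qq < 1.
Proof. rewrite /qq; have := r0; nra. Qed.

Lemma KK_ge0 : 0 <= KK.
Proof.
rewrite /KK subr_ge0 invf_ge1; last by apply: exprn_gt0.
by apply: exprn_ile1; [exact: ltW | exact: r_le1].
Qed.

Lemma base e x y : posf e -> posf x -> posf y ->
  exists m M, [/\ 0 < m, M - m <= m * KK &
    forall i, m * ap e y i <= ap e x i <= M * ap e y i].
Proof.
move=> he hx hy.
set x' := ap e x; set y' := ap e y.
have xb := ap_bal _ _ he (fun j => ltW (hx j)).
have yb := ap_bal _ _ he (fun j => ltW (hy j)).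
have xp := ap_pos _ _ he hx; have yp := ap_pos _ _ he hy.
have y0 : 0 < y' i0 by exact: yp.
have x0 : 0 < x' i0 by exact: xp.
pose c := x' i0 / y' i0.
have c0 : 0 < c by exact: divr_gt0.
have r2 : 0 < r ^+ 2 by exact: exprn_gt0.
exists (r ^+ 2 * c), (c / r ^+ 2); split.
- exact: mulr_gt0.
- rewrite /KK le_eqVlt; apply/orP; left; apply/eqP.
  by field; rewrite gt_eqF.
move=> i; apply/andP; split.
- have h : r ^+ 2 * x' i0 * y' i <= x' i * y' i0.
    by apply: helper; [exact/ltW | exact/ltW/yp | exact: xb | exact: yb].
  have h2 : r ^+ 2 * x' i0 * y' i / y' i0 <= x' i by rewrite ler_pdivrMr.
  have -> : r ^+ 2 * c * y' i = r ^+ 2 * x' i0 * y' i / y' i0.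
    by rewrite /c; field; rewrite gt_eqF.
  exact: h2.
- have h : r ^+ 2 * x' i * y' i0 <= x' i0 * y' i.
    by apply: helper; [exact/ltW/xp | exact/ltW/yp | exact: xb | exact: yb].
  have -> : c / r ^+ 2 * y' i = x' i0 * y' i / (y' i0 * r ^+ 2).
    by rewrite /c; field; rewrite !gt_eqF.
  rewrite ler_pdivlMr; last exact: mulr_gt0.
  have -> : x' i * (y' i0 * r ^+ 2) = r ^+ 2 * x' i * y' i0 by ring.
  exact: h.
Qed.

Lemma chain n : forall e x y, (forall k, posf (e k)) -> posf x -> posf y ->
  exists m M, [/\ 0 < m, M - m <= m * KK * qq ^+ n &
    forall i, m * capp e n.+1 y i <= capp e n.+1 x i <= M * capp e n.+1 y i].
Proof.
elim: n => [|n IH] e x y he hx hy.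
  have [m [M [m0 hM hb]]] := base _ _ _ (he 0%N) hx hy.
  by exists m, M; split => //; rewrite expr0 mulr1.
have [m [M [m0 hM hb]]] := IH (fun k => e k.+1) x y (fun k => he k.+1) hx hy.
have [m' [M' [hm hM' hb']]] := step _ _ _ m M (he 0%N)
  (capp_pos _ _ _ (fun k => he k.+1) hx) (capp_pos _ _ _ (fun k => he k.+1) hy) hb.
exists m', M'; split => //.
- exact: lt_le_trans hm.
- apply: (le_trans hM'); rewrite -/qq [qq ^+ n.+1]exprS; set t := qq ^+ n.
  have q0 := qq_ge0; have K0 := KK_ge0.
  have qn : 0 <= t by exact: exprn_ge0.
  have -> : m' * KK * (qq * t) = qq * (m' * KK * t) by ring.
  apply: ler_wpM2l => //; apply: (le_trans hM).
  by apply: ler_wpM2r => //; apply: ler_wpM2r => //; exact: ltW.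
Qed.

Definition ns (x : 'I_N -> R) : 'I_N -> R := fun i => x i / \sum_k x k.
Definition one : 'I_N -> R := fun _ => 1.

Lemma one_pos : posf one.
Proof. by move=> i; rewrite /one ltr01. Qed.

Lemma ns_close x y m M : posf x -> posf y -> 0 < m ->
  (forall i, m * y i <= x i <= M * y i) ->
  forall i, `|ns x i - ns y i| <= (M - m) / m.
Proof.
move=> hx hy m0 hb i.
have Sx0 := sum_gt0 _ hx; have Sy0 := sum_gt0 _ hy.
set Sx := \sum_k x k in Sx0 *; set Sy := \sum_k y k in Sy0 *.
have hl : m * Sy <= Sx by rewrite /Sx /Sy mulr_sumr; apply: ler_sum => j _; case/andP: (hb j).
have hu : Sx <= M * Sy by rewrite /Sx /Sy mulr_sumr; apply: ler_sum => j _; case/andP: (hb j).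
have yi : y i <= Sy by apply: term_le_sum => j; exact/ltW.
have xi : x i <= Sx by apply: term_le_sum => j; exact/ltW.
have mM : m <= M.
  by case/andP: (hb i) => h1 h2; rewrite -(ler_pM2r (hy i)); exact: le_trans h1 h2.
rewrite /ns -/Sx -/Sy.
set a := x i / Sx; set b := y i / Sy.
have xa : x i = a * Sx by rewrite /a mulfVK // gt_eqF.
have yb : y i = b * Sy by rewrite /b mulfVK // gt_eqF.
have a0 : 0 <= a by apply: divr_ge0; [exact/ltW | exact/ltW].
have b0 : 0 <= b by apply: divr_ge0; [exact/ltW | exact/ltW].
have a1 : a <= 1 by rewrite /a ler_pdivrMr // mul1r.
have b1 : b <= 1 by rewrite /b ler_pdivrMr // mul1r.
case/andP: (hb i); rewrite xa yb => h1 h2.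
have e1 : a * m <= M * b.
  rewrite -(ler_pM2r Sy0) -mulrA -[M * b * Sy]mulrA; apply: le_trans h2.
  exact: ler_wpM2l.
have e2 : m * b <= a * M.
  rewrite -(ler_pM2r Sy0) -mulrA -[a * M * Sy]mulrA; apply: (le_trans h1).
  exact: ler_wpM2l.
have hab : (a - b) * m <= M - m by nra.
have hba : (b - a) * m <= M - m by nra.
rewrite ler_norml; apply/andP; split; last by rewrite ler_pdivlMr.
by rewrite lerNl opprB ler_pdivlMr.
Qed.

Lemma u_bound e k p i : (forall k, posf (e k)) ->
  `|ns (capp e (k.+1 + p) one) i - ns (capp e k.+1 one) i| <= KK * qq ^+ k.
Proof.
move=> he; rewrite capp_split.
have hz := capp_pos (fun n => e (k.+1 + n)%N) p one (fun n => he _) one_pos.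
have [m [M [m0 hM hb]]] := chain k e _ one he hz one_pos.
apply: (le_trans (ns_close _ _ _ _ (capp_pos _ _ _ he hz) (capp_pos _ _ _ he one_pos) m0 hb i)).
by rewrite ler_pdivrMr // mulrC mulrA.
Qed.

Lemma u_lb e n i : (forall k, posf (e k)) ->
  r / N%:R <= ns (capp e n.+1 one) i.
Proof.
move=> he; rewrite /=.
set y := ap _ _.
have yp : posf y := ap_pos _ _ (he 0%N) (capp_pos _ _ _ (fun k => he k.+1) one_pos).
have yb := ap_bal _ _ (he 0%N) (fun j => ltW (capp_pos _ n one (fun k => he k.+1) one_pos j)).
have S0 := sum_gt0 _ yp.
have N0 : (0 : R) < N%:R by rewrite ltr0n; case: (N) i0 => [[]|].
rewrite /ns ler_pdivlMr // mulrAC ler_pdivrMr //.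
rewrite mulr_sumr.
have -> : y i * N%:R = \sum_(k < N) y i by rewrite sumr_const card_ord mulr_natr.
apply: ler_sum => k _; exact: yb.
Qed.

Lemma u_ub e n i : (forall k, posf (e k)) -> ns (capp e n one) i <= 1.
Proof.
move=> he; have yp := capp_pos _ n _ he one_pos.
rewrite /ns ler_pdivrMr ?mul1r; last exact: sum_gt0.
by apply: term_le_sum => j; exact/ltW.
Qed.


Definition useq e i := fun n => ns (capp e n one) i.

Lemma useq_cvg e i : (forall k, posf (e k)) -> cvg (useq e i @ \oo).
Proof.
move=> he; apply: cauchy_cvg; apply: cauchy_exP => eps eps0.
have qn : `|qq| < 1 by rewrite ger0_norm ?qq_lt1 //; exact: qq_ge0.
have K1 : 0 < KK + 1 by have := KK_ge0; lra.
have [k _ hk] := cvgr0_norm_lt _ (cvg_expr qn) _ (divr_gt0 eps0 K1).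
exists (useq e i k.+1); exists k.+1 => // n /= hn.
rewrite -ball_normE /ball_ /= -(subnKC hn) distrC.
apply: (le_lt_trans (u_bound _ _ _ _ he)).
have := hk k (leqnn k); rewrite /= ger0_norm; last exact: exprn_ge0 qq_ge0.
rewrite ltr_pdivlMr // => h.
apply: le_lt_trans h; rewrite mulrDr mulr1 mulrC lerDl; apply: exprn_ge0; exact: qq_ge0.
Qed.


Definition vlim e i := lim (useq e i @ \oo).

Lemma vlim_cvg e i : (forall k, posf (e k)) -> useq e i @ \oo --> vlim e i.
Proof. by move=> he; exact: useq_cvg. Qed.

Lemma N0 : (0 : R) < N%:R.
Proof. by rewrite ltr0n; case: (N) i0 => [[]|]. Qed.

Lemma vlim_lb e i : (forall k, posf (e k)) -> r / N%:R <= vlim e i.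
Proof.
move=> he; apply: limr_ge; first exact: useq_cvg.
exists 1%N => // n /= hn; case: n hn => // n _; exact: u_lb.
Qed.

Lemma vlim_ub e i : (forall k, posf (e k)) -> vlim e i <= 1.
Proof.
move=> he; apply: limr_le; first exact: useq_cvg.
by exists 0%N => // n /= _; exact: u_ub.
Qed.

Lemma ap_scale e c x i : ap e (fun j => c * x j) i = c * ap e x i.
Proof. by rewrite /ap mulr_sumr; apply: eq_bigr => j _; ring. Qed.

Lemma ns_scale c x i : 0 < c -> ns (fun j => c * x j) i = ns x i.
Proof.
move=> c0; rewrite /ns -mulr_sumr invfM mulrACA mulfV ?mul1r // ?gt_eqF //.
Qed.

Lemma ap_cvg e (z : nat -> 'I_N -> R) (l : 'I_N -> R) i :
  (forall j, z ^~ j @ \oo --> l j) -> (fun n => ap e (z n) i) @ \oo --> ap e l i.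
Proof.
move=> hz; rewrite /ap.
apply: (@cvg_big _ _ +%R 0 xpredT add_continuous) => j _.
by apply: cvgM; [exact: cvg_cst | exact: hz].
Qed.

Lemma ns_ap_cvg e (z : nat -> 'I_N -> R) (l : 'I_N -> R) i : posf e -> posf l ->
  (forall j, z ^~ j @ \oo --> l j) -> (fun n => ns (ap e (z n)) i) @ \oo --> ns (ap e l) i.
Proof.
move=> he hl hz; rewrite /ns.
apply: cvgM; first exact: ap_cvg.
apply: cvgV; first by rewrite gt_eqF //; apply: sum_gt0; exact: ap_pos.
apply: (@cvg_big _ _ +%R 0 xpredT add_continuous) => k _.
exact: ap_cvg.
Qed.

Definition econs (d0 : 'I_N -> R) (e : nat -> 'I_N -> R) : nat -> 'I_N -> R :=
  fun k => if k is k'.+1 then e k' else d0.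

Lemma econs_pos d0 e : posf d0 -> (forall k, posf (e k)) -> forall k, posf (econs d0 e k).
Proof. by move=> h0 he [|k] /=. Qed.

Lemma vlim_eig d0 e i : posf d0 -> (forall k, posf (e k)) ->
  vlim (econs d0 e) i = ns (ap d0 (vlim e)) i.
Proof.
move=> h0 he; apply: cvg_lim => //.
rewrite -cvg_shiftS.
have E : forall n, useq (econs d0 e) i n.+1 = ns (ap d0 (fun j => useq e j n)) i.
  move=> n; rewrite /useq /=.
  have S0 : 0 < \sum_k capp e n one k by apply: sum_gt0; exact: capp_pos he one_pos.
  rewrite -(ns_scale ((\sum_k capp e n one k)^-1)); last by rewrite invr_gt0.
  by congr ns; apply: funext => k; rewrite -ap_scale; congr ap; apply: funext => j; rewrite /ns mulrC.
rewrite (_ : [sequence useq (econs d0 e) i n.+1]_n = (fun n => ns (ap d0 (fun j => useq e j n)) i)); last by apply: funext => n; exact: E.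
apply: ns_ap_cvg => //; last by move=> j; exact: vlim_cvg.
move=> j; apply: lt_le_trans (vlim_lb _ _ he); apply: divr_gt0 => //; exact: N0.
Qed.
End Core.

Lemma term_le_sum2 (R : realType) (N : nat) (F : 'I_N -> 'I_N -> R) i j :
  (forall i j, 0 <= F i j) -> F i j <= \sum_i \sum_j F i j.
Proof.
move=> hF; rewrite (bigD1 i) //= (bigD1 j) //= -addrA lerDl.
apply: addr_ge0; first by apply: sumr_ge0 => k _; exact: hF.
by apply: sumr_ge0 => k _; apply: sumr_ge0 => l _; exact: hF.
Qed.

Lemma r_exists (R : realType) (N : nat) (A : 'M[R]_N) :
  (forall i j, 0 < A i j) -> exists r : R, 0 < r /\ forall i k j, r * A k j <= A i j.
Proof.
move=> hA.
pose Si := \sum_i \sum_j (A i j)^-1; pose Ss := \sum_i \sum_j A i j.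
have Si0 : 0 <= Si by apply: sumr_ge0 => i _; apply: sumr_ge0 => j _; rewrite invr_ge0; exact/ltW.
have Ss0 : 0 <= Ss by apply: sumr_ge0 => i _; apply: sumr_ge0 => j _; exact/ltW.
have D0 : 0 < Si * Ss + 1 by apply: ltr_wpDl => //; exact: mulr_ge0.
exists (Si * Ss + 1)^-1; split; first by rewrite invr_gt0.
move=> i k j; rewrite mulrC ler_pdivrMr //.
have h1 : A k j <= Ss by apply: (@term_le_sum2 R N A k j) => a b; exact/ltW.
have h2 : (A i j)^-1 <= Si by apply: (@term_le_sum2 R N (fun a b => (A a b)^-1) i j) => a b; rewrite invr_ge0; exact/ltW.
have h3 : 1 <= A i j * Si.
  by rewrite -(ler_pM2l (hA i j)) in h2; rewrite mulfV ?gt_eqF // in h2.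
have := hA i j; nra.
Qed.

Section Meas.
Context d (T : measurableType d) (R : realType).

Lemma iter_meas (f : T -> T) : measurable_fun setT f -> forall k, measurable_fun setT (iter k f).
Proof.
move=> mf; elim=> [|k IH] /=; first exact: measurable_id.
exact: (measurableT_comp mf IH).
Qed.

Lemma meas_inv (f : T -> R) : measurable_fun setT f -> (forall w, 0 < f w) ->
  measurable_fun setT (fun w => (f w)^-1).
Proof.
move=> mf hf.
change (measurable_fun setT ((@GRing.inv R) \o f)).
apply: (measurable_comp (F := (`]0, +oo[%classic : set R))) => //.
- by move=> _ [w _ <-]; rewrite /= in_itv /= andbT; exact: hf.
- apply: measurable_realfun.open_continuous_measurable_fun; first exact: interval_open.
  move=> x; rewrite inE /= in_itv /= andbT => x0.
  apply: continuousV; first by rewrite gt_eqF.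
  exact: cvg_id.
Qed.


Variables (N : nat) (A : 'M[R]_N) (i0 : 'I_N).
Hypothesis hA : forall i j, 0 < A i j.
Variable r : R.
Hypothesis r0 : 0 < r.
Hypothesis hr : forall i k j, r * A k j <= A i j.
Variable E : T -> nat -> 'I_N -> R.
Hypothesis mE : forall k j, measurable_fun setT (fun w => E w k j).
Hypothesis pE : forall w k, posf R N (E w k).

Lemma capp_meas n : forall (E : T -> nat -> 'I_N -> R),
  (forall k j, measurable_fun setT (fun w => E w k j)) ->
  forall x i, measurable_fun setT (fun w => capp R N A (E w) n x i).
Proof.
elim: n => [|n IH] E' hE x i /=; first exact: measurable_cst.
rewrite /ap; apply: measurable_sum => j; apply: measurable_realfun.measurable_funM.
  by apply: measurable_realfun.measurable_funM; [exact: measurable_cst | exact: hE].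
exact: (IH (fun w k => E' w k.+1)).
Qed.

Lemma useq_meas i n : measurable_fun setT (fun w => useq R N A (E w) i n).
Proof.
rewrite /useq /ns; apply: measurable_realfun.measurable_funM; first exact: capp_meas.
apply: meas_inv; first by apply: measurable_sum => k; exact: capp_meas.
move=> w; apply: (sum_gt0 _ _ i0) => k.
by apply: (capp_pos _ _ _ i0 hA) => //; exact: one_pos.
Qed.

Lemma vlim_meas i : measurable_fun setT (fun w => vlim R N A (E w) i).
Proof.
apply: (measurable_realfun.measurable_fun_cvg (h := fun n w => useq R N A (E w) i n)).
  by move=> n; exact: useq_meas.
by move=> w _; exact: (vlim_cvg _ _ _ i0 hA r r0 hr).
Qed.

Definition nrm (v : 'I_N -> R) := Num.sqrt (\sum_j v j ^+ 2).

Lemma nrm_gt0 v : posf R N v -> 0 < nrm v.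
Proof.
move=> hv; rewrite /nrm sqrtr_gt0; apply: (sum_gt0 _ _ i0) => j.
exact: exprn_gt0.
Qed.

Definition wf (w : T) (i : 'I_N) := vlim R N A (E w) i / nrm (vlim R N A (E w)).

Lemma vlim_pos w : posf R N (vlim R N A (E w)).
Proof.
move=> j; apply: lt_le_trans (vlim_lb _ _ _ i0 hA r r0 hr _ _ (pE w)).
apply: divr_gt0 => //; exact: (N0 _ _ i0).
Qed.

Lemma wf_meas i : measurable_fun setT (fun w => wf w i).
Proof.
rewrite /wf; apply: measurable_realfun.measurable_funM; first exact: vlim_meas.
apply: meas_inv; last by move=> w; apply: nrm_gt0; exact: vlim_pos.
rewrite /nrm; apply: measurableT_comp.
  exact: (measurable_realfun.continuous_measurable_fun (@sqrt_continuous R)).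
apply: measurable_sum => j; rewrite /=.
under eq_fun do rewrite expr2.
by apply: measurable_realfun.measurable_funM; exact: vlim_meas.
Qed.

End Meas.

Section Grow.
Variable R : realType.

Lemma sumsq_le (I : Type) (s : seq I) (a : I -> R) : (forall j, 0 <= a j) ->
  \sum_(j <- s) a j ^+ 2 <= (\sum_(j <- s) a j) ^+ 2.
Proof.
move=> ha; elim: s => [|x s IH]; first by rewrite !big_nil expr0n.
rewrite !big_cons.
have s0 : 0 <= \sum_(j <- s) a j by apply: sumr_ge0 => j _.
rewrite sqrrD; have h : 0 <= a x * (\sum_(j <- s) a j) *+ 2.
  by apply: mulrn_wge0; apply: mulr_ge0 => //.
lra.
Qed.

Lemma sqr_le (a b : R) : 0 <= a -> a <= b -> a ^+ 2 <= b ^+ 2.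
Proof. move=> a0 ab; rewrite !expr2; apply: ler_pM => //. Qed.

Variable N : nat.

Lemma vnorm_lb (M : 'M[R]_N) (v : 'cV[R]_N) c : (forall i j, 0 <= M i j) ->
  (forall j, c <= v j ord0) -> 0 <= c -> c * mnorm M <= vnorm (M *m v).
Proof.
move=> hM hv c0; rewrite /mnorm /vnorm -(ger0_norm c0) -sqrtr_sqr -sqrtrM ?sqr_ge0 //.
rewrite ler_sqrt; last by apply: sumr_ge0 => i _; exact: sqr_ge0.
rewrite mulr_sumr; apply: ler_sum => i _.
have s0 : 0 <= \sum_j M i j by apply: sumr_ge0 => j _.
apply: (@le_trans _ _ ((c * \sum_j M i j) ^+ 2)).
  rewrite exprMn; apply: ler_wpM2l; first exact: sqr_ge0.
  exact: sumsq_le.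
apply: sqr_le; first exact: mulr_ge0.
rewrite mxE mulr_sumr; apply: ler_sum => j _; rewrite mulrC; apply: ler_wpM2l => //.
Qed.

Lemma entry_le_mnorm (M : 'M[R]_N) i j : M i j <= mnorm M.
Proof.
rewrite /mnorm; apply: (@le_trans _ _ `|M i j|); first exact: ler_norm.
rewrite -sqrtr_sqr ler_sqrt; last by apply: sumr_ge0 => a _; apply: sumr_ge0 => b _; exact: sqr_ge0.
by apply: (@term_le_sum2 R N (fun a b => M a b ^+ 2)) => a b; exact: sqr_ge0.
Qed.

Lemma vnorm_ub (M : 'M[R]_N) (v : 'cV[R]_N) : (forall i j, 0 <= M i j) ->
  (forall j, 0 <= v j ord0 <= 1) -> vnorm (M *m v) <= (N%:R * N%:R) * mnorm M.
Proof.
move=> hM hv.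
have Mv0 : forall i, 0 <= (M *m v) i ord0.
  by move=> i; rewrite mxE; apply: sumr_ge0 => j _; apply: mulr_ge0 => //; case/andP: (hv j).
apply: (@le_trans _ _ (\sum_i (M *m v) i ord0)).
  rewrite /vnorm -(ger0_norm (sumr_ge0 _ (fun i _ => Mv0 i))) -sqrtr_sqr ler_sqrt ?sqr_ge0 //.
  exact: sumsq_le.
apply: (@le_trans _ _ (\sum_(i < N) \sum_(j < N) mnorm M)); last first.
  by rewrite !sumr_const !card_ord -mulrnA -[mnorm M *+ _]mulr_natl natrM.
apply: ler_sum => i _; rewrite mxE; apply: ler_sum => j _.
apply: (@le_trans _ _ (M i j)); last exact: entry_le_mnorm.
by case/andP: (hv j) => h1 h2; rewrite -[leRHS]mulr1; apply: ler_wpM2l.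
Qed.

End Grow.

Section Grow2.
Variable R : realType.

Lemma growth (f g : nat -> R) (lam : \bar R) c C : 0 < c ->
  (forall n, (0 < n)%N -> 0 < f n /\ c * f n <= g n <= C * f n) ->
  (fun n => (n%:R^-1 * ln (f n))%:E) @ \oo --> lam ->
  (fun n => (n%:R^-1 * ln (g n))%:E) @ \oo --> lam.
Proof.
move=> c0 hfg hf.
pose h n := n%:R^-1 * ln (g n) - n%:R^-1 * ln (f n).
have -> : (fun n => (n%:R^-1 * ln (g n))%:E) = (fun n => ((n%:R^-1 * ln (f n))%:E + (h n)%:E)%E).
  by apply: funext => n; rewrite -EFinD /h addrC subrK.
rewrite -[lam]adde0; apply: cvgeD; [exact: fin_num_adde_defl | exact: hf |].
apply: (@cvg_EFin R nat \oo _ (fun x => (h x)%:E) 0); first exact: nearW.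
pose K0 := `|ln c| + `|ln C|.
have H0 : (fun n => K0 * 2 * harmonic n) @ \oo --> 0.
  by rewrite -(mulr0 (K0 * 2)); apply: cvgM; [exact: cvg_cst | exact: cvg_harmonic].
have H1 : (fun n => - (K0 * 2 * harmonic n)) @ \oo --> 0.
  by rewrite -oppr0; apply: cvgN.
have Hn : \forall n \near \oo, - (K0 * 2 * harmonic n) <= h n <= K0 * 2 * harmonic n.
  exists 1%N => // n /= hn.
  have [f0 /andP[hl hu]] := hfg n hn.
  have cC : c <= C by rewrite -(ler_pM2r f0); exact: le_trans hl hu.
  have C0 : 0 < C by exact: lt_le_trans cC.
  have g0 : 0 < g n by apply: lt_le_trans hl; exact: mulr_gt0.
  have l1 : ln c + ln (f n) <= ln (g n).
    by rewrite -lnM ?posrE ?mulr_gt0 // ler_ln ?posrE ?mulr_gt0 //.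
  have l2 : ln (g n) <= ln C + ln (f n).
    by rewrite -lnM ?posrE ?mulr_gt0 // ler_ln ?posrE ?mulr_gt0 //.
  have hn0 : (0 : R) < n%:R by rewrite ltr0n.
  have hinv : n%:R^-1 <= 2 * harmonic n :> R.
    rewrite /harmonic /= -(ler_pM2r hn0) mulVf ?gt_eqF // mulrAC ler_pdivlMr ?ltr0n // mul1r.
    by rewrite -natrM ler_nat; move: hn; clear; case: n => // n _; rewrite mul2n -addnn addSn ltnS leq_addl.
  have hK : `|ln (g n) - ln (f n)| <= K0.
    rewrite ler_norml /K0; apply/andP; split.
      have := ler_norm (ln c); have := ler_norm (- ln c); rewrite normrN; have := normr_ge0 (ln C); lra.
    have := ler_norm (ln C); have := normr_ge0 (ln c); lra.
  have hh : `|h n| <= K0 * 2 * harmonic n.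
    rewrite /h -mulrBr normrM ger0_norm ?invr_ge0 ?ler0n // mulrC -mulrA.
    apply: ler_pM => //.
  rewrite -ler_norml; exact: hh.
exact: (squeeze_cvgr Hn H1 H0).
Qed.

End Grow2.

Lemma Smat_entry (R : realType) (T : Type) (N : nat) (A : 'M[R]_N) (dd : T -> 'I_N -> R) w i j :
  Smat A dd w i j = A i j * dd w j.
Proof. by rewrite /Smat mul_mx_diag !mxE. Qed.

Lemma Smat_mul (R : realType) (T : Type) (N : nat) (A : 'M[R]_N) (dd : T -> 'I_N -> R) w
  (v : 'cV[R]_N) i :
  (Smat A dd w *m v) i ord0 = ap R N A (dd w) (fun j => v j ord0) i.
Proof. by rewrite mxE /ap; apply: eq_bigr => j _; rewrite Smat_entry. Qed.

Lemma mulmx_pos (R : realType) (N : nat) (i0 : 'I_N) (M M' : 'M[R]_N) :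
  (forall i j, 0 < M i j) -> (forall i j, 0 < M' i j) -> forall i j, 0 < (M *m M') i j.
Proof.
move=> h h' i j; rewrite mxE; apply: (sum_gt0 _ _ i0) => l; exact: mulr_gt0.
Qed.

Lemma Sc_pos (R : realType) (T : Type) (N : nat) (i0 : 'I_N) (A : 'M[R]_N)
  (dd : T -> 'I_N -> R) theta w :
  (forall i j, 0 < A i j) -> (forall w i, 0 < dd w i) ->
  forall n i j, 0 < Scocycle (Smat A dd) theta n.+1 w i j.
Proof.
move=> hA hd; elim=> [|n IH] i j /=.
  by rewrite mulmx1 Smat_entry; exact: mulr_gt0.
apply: (mulmx_pos _ _ i0) => // a b; rewrite Smat_entry; exact: mulr_gt0.
Qed.

Lemma nrm_scale (R : realType) (N : nat) c (z : 'I_N -> R) : 0 <= c ->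
  nrm R N (fun j => c * z j) = c * nrm R N z.
Proof.
move=> c0; rewrite /nrm (eq_bigr (fun j => c ^+ 2 * z j ^+ 2)); last by move=> j _; rewrite exprMn.
rewrite -mulr_sumr sqrtrM ?sqr_ge0 // sqrtr_sqr ger0_norm //.
Qed.

Lemma ns_nrm (R : realType) (N : nat) (i0 : 'I_N) (z : 'I_N -> R) i : posf R N z ->
  ns R N z i / nrm R N (ns R N z) = z i / nrm R N z.
Proof.
move=> hz; have S0 := sum_gt0 _ _ i0 _ hz.
have -> : ns R N z = (fun j => (\sum_k z k)^-1 * z j) by apply: funext => j; rewrite /ns mulrC.
rewrite nrm_scale ?invr_ge0; last exact: ltW.
have n0 : 0 < nrm R N z by apply: (nrm_gt0 _ _ i0).
rewrite invfM mulrACA mulfV ?mul1r // gt_eqF // invr_gt0 //.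
Qed.

Lemma iter_pres d (T : measurableType d) (R : realType) (P : probability T R) (f : T -> T) :
  measurable_fun setT f -> (forall A, measurable A -> P (f @^-1` A) = P A) ->
  forall k A, measurable A -> P (iter k f @^-1` A) = P A.
Proof.
move=> mf hf; elim=> [|k IH] A mA //.
have -> : iter k.+1 f @^-1` A = f @^-1` (iter k f @^-1` A).
  by apply/seteqP; split => x /=; rewrite -iterS iterSr.
rewrite hf ?IH //.
by have := iter_meas _ _ _ mf k measurableT _ mA; rewrite setTI.
Qed.

Theorem proposition3p1 (d : measure_display) (T : measurableType d)
  (R : realType) (P : probability T R) (theta : T -> T)
  (N : nat) (A : 'M[R]_N) (dd : T -> 'I_N -> R) (lam : \bar R) :
  (0 < N)%N ->
  automorphism P theta ->
  ergodic P theta ->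
  (forall i j, 0 < A i j) ->
  (forall i, measurable_fun setT (fun w => dd w i)) ->
  (forall w i, 0 < dd w i) ->
  P.-integrable setT (fun w => (lnplus (dmax dd w))%:E) ->
  (* lam is the top Lyapunov exponent of S = A D *)
  {ae P, forall w, ((fun n : nat =>
      ((n%:R)^-1 * ln (mnorm (Scocycle (Smat A dd) theta n w)))%:E)
      @ \oo --> lam)} ->
  exists (Omega0 : set T) (wv : T -> 'cV[R]_N) (rho : T -> R),
    [/\ measurable Omega0, theta @` Omega0 = Omega0, P Omega0 = 1%E &
        (forall i, measurable_fun Omega0 (fun w => wv w i ord0))] /\
    [/\
        (forall w, Omega0 w -> pos_vec (wv w) /\ vnorm (wv w) = 1),
        (forall w, Omega0 w -> 0 < rho w),
        (forall w, Omega0 w -> Smat A dd w *m wv w = rho w *: wv (theta w)) &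
        (forall w, Omega0 w ->
           (fun n : nat =>
              ((n%:R)^-1 * ln (vnorm (Scocycle (Smat A dd) theta n w *m wv w)))%:E)
           @ \oo --> lam)].
Proof.
move=> N0 [thi [c1 c2 mth mthi hpres]] herg hA hdd hpos hint hlam.
pose i0 : 'I_N := Ordinal N0.
have [r [r0 hr]] := r_exists _ _ _ hA.
pose E := fun w k => dd (iter k.+1 thi w).
have mE : forall k j, measurable_fun setT (fun w => E w k j).
  move=> k j; exact: (measurableT_comp (hdd j) (iter_meas _ _ _ mthi k.+1)).
have pE : forall w k, posf R N (E w k) by move=> w k j; exact: hpos.
pose v := fun w => vlim R N A (E w).
pose wvf := wf d T R N A E.
pose wv := fun w => \col_i wvf w i.
pose rho := fun w => nrm R N (ap R N A (dd w) (v w)) / nrm R N (v w).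
have hvpos w : posf R N (v w) := vlim_pos d T R N A i0 hA r r0 hr E pE w.
have hv_lb w j : r / N%:R <= v w j := vlim_lb R N A i0 hA r r0 hr (E w) j (pE w).
have hnrm w : 0 < nrm R N (v w) := nrm_gt0 R N i0 (v w) (hvpos w).
have hEth w : E (theta w) = econs R N (dd w) (E w).
  by apply: funext => -[|k]; rewrite /E /= ?c1 // -!iterS iterSr c1.
have hveig w : v (theta w) = ns R N (ap R N A (dd w) (v w)).
  apply: funext => i; rewrite /v hEth.
  by apply: (vlim_eig R N A i0 hA r r0 hr) => // j; exact: hpos.
have [N1 [mN1 PN1 sN1]] := hlam.
have mpre f : measurable_fun setT f -> forall k, measurable (iter k f @^-1` N1).
  by move=> mf k; have := iter_meas _ _ _ mf k measurableT _ mN1; rewrite setTI.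
have hpresi : forall A, measurable A -> P (thi @^-1` A) = P A.
  move=> B mB; rewrite -(hpres (thi @^-1` B)); last first.
    by have := mthi measurableT _ mB; rewrite setTI.
  by congr (P _); apply/seteqP; split => x /=; rewrite c1.
pose Om := \bigcap_k (~` (iter k theta @^-1` N1) `&` ~` (iter k thi @^-1` N1)).
have mOm : measurable Om.
  apply: bigcap_measurable; first by exists 0%N.
  by move=> k _; apply: measurableI; apply: measurableC; exact: mpre.
have OmP w : Om w <-> forall k, ~ N1 (iter k theta w) /\ ~ N1 (iter k thi w).
  by rewrite /Om; split => h k; [exact: h k I | move=> _; exact: h k].
exists Om, wv, rho; split.
  split => //.
  - apply/seteqP; split.
      move=> _ [w /OmP hw <-]; apply/OmP => k; split.
        rewrite -iterSr; exact: (hw k.+1).1.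
      case: k => [|k]; first exact: (hw 1%N).1.
      rewrite iterSr c1; exact: (hw k).2.
    move=> w /OmP hw; exists (thi w); last exact: c2.
    apply/OmP => k; split.
      case: k => [|k]; first exact: (hw 1%N).2.
      rewrite iterSr c2; exact: (hw k).1.
    rewrite -iterSr; exact: (hw k.+1).2.
  - have nC : P.-negligible (~` Om).
      apply: (@negligibleS _ _ _ _ (\bigcup_k ((iter k theta @^-1` N1) `|` (iter k thi @^-1` N1)))).
        move=> w hw; apply: contrapT => hn; apply: hw; apply/OmP => k.
        by split => h; apply: hn; exists k => //; [left | right].
      apply: negligible_bigcup => k; apply: negligibleU.
        exists (iter k theta @^-1` N1); split => //; first exact: mpre.
        exact: (eq_trans (iter_pres _ _ _ _ _ mth hpres k N1 mN1) PN1).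
      exists (iter k thi @^-1` N1); split => //; first exact: mpre.
      exact: (eq_trans (iter_pres _ _ _ _ _ mthi hpresi k N1 mN1) PN1).
    have PC : P (~` Om) = 0 by apply/negligibleP => //; exact: measurableC.
    have := probability_setC P mOm; rewrite PC => /esym/eqP.
    by rewrite sube_eq ?fin_num_adde_defr // add0e => /eqP.
  - move=> i; have -> : (fun w => wv w i ord0) = (fun w => wvf w i).
      by apply: funext => w; rewrite mxE.
    apply: (measurable_funS measurableT) => //.
    exact: (wf_meas d T R N A i0 hA r r0 hr E mE pE).
have hvle w j : v w j <= nrm R N (v w).
  rewrite -(ger0_norm (ltW (hvpos w j))) -sqrtr_sqr /nrm ler_sqrt; last first.
    by apply: sumr_ge0 => k _; exact: sqr_ge0.
  by apply: (term_le_sum _ _ (fun k => v w k ^+ 2)) => k; exact: sqr_ge0.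
have hwv w j : wv w j ord0 = (nrm R N (v w))^-1 * v w j by rewrite mxE mulrC.
split.
- move=> w _; split.
    by move=> i; rewrite hwv; apply: mulr_gt0; [rewrite invr_gt0; exact: hnrm | exact: hvpos].
  rewrite /vnorm (eq_bigr (fun i => v w i ^+ 2 / nrm R N (v w) ^+ 2)); last first.
    by move=> i _; rewrite hwv exprMn exprVn mulrC.
  rewrite -mulr_suml /nrm sqr_sqrtr; last by apply: sumr_ge0 => i _; exact: sqr_ge0.
  rewrite mulfV ?sqrtr1 // gt_eqF // -sqrtr_gt0; exact: hnrm.
- move=> w _; apply: divr_gt0 => //; apply: (nrm_gt0 _ _ i0); apply: (ap_pos _ _ _ i0 hA); [move=> j; exact: hpos | exact: hvpos].
- move=> w _; apply/matrixP => i j; rewrite (ord1 j) Smat_mul [RHS]mxE hwv.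
  have -> : (fun j => wv w j ord0) = (fun j => (nrm R N (v w))^-1 * v w j).
    by apply: funext => k; exact: hwv.
  rewrite ap_scale hveig.
  have zp : posf R N (ap R N A (dd w) (v w)).
    by apply: (ap_pos _ _ _ i0 hA); [move=> k; exact: hpos | exact: hvpos].
  rewrite [X in rho w * X]mulrC (ns_nrm _ _ i0 _ _ zp) /rho.
  have := nrm_gt0 _ _ i0 _ zp; have := hnrm w => h1 h2.
  by field; rewrite !gt_eqF.
move=> w /OmP hw.
have gw : (fun n : nat =>
      ((n%:R)^-1 * ln (mnorm (Scocycle (Smat A dd) theta n w)))%:E) @ \oo --> lam.
  apply: contrapT => nc; apply: (hw 0%N).1; apply: sN1; exact: nc.
pose cw := (r / N%:R) / nrm R N (v w).
have cw0 : 0 < cw by apply: divr_gt0 => //; apply: divr_gt0 => //; rewrite ltr0n.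
have Scp := Sc_pos _ _ _ i0 _ _ theta w hA hpos.
apply: (@growth R (fun n => mnorm (Scocycle (Smat A dd) theta n w))
  (fun n => vnorm (Scocycle (Smat A dd) theta n w *m wv w)) lam cw (N%:R * N%:R)) => //.
move=> [|n] // _; split.
  apply: lt_le_trans (entry_le_mnorm _ _ _ i0 i0); exact: Scp.
apply/andP; split.
  apply: vnorm_lb; [move=> a b; exact/ltW/Scp | | exact: ltW].
  move=> j; rewrite hwv mulrC ler_pM2r ?invr_gt0 //; exact: hv_lb.
apply: vnorm_ub; first by move=> a b; exact/ltW/Scp.
move=> j; rewrite hwv; apply/andP; split.
  by apply: mulr_ge0; [rewrite invr_ge0; exact/ltW | exact/ltW/hvpos].
by rewrite mulrC ler_pdivrMr // mul1r; exact: hvle.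
Qed.
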